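(* Let $s,t$ be positive integers. Then $prc(K_{s,t})=\max\{s,t\}$.
   Context: $K_{s,t}$ is the complete bipartite graph with parts of sizes $s$ and $t$. A path in an edge-coloured graph is a rainbow path if its edges receive pairwise distinct colours. The proper rainbow connection number $prc(G)$ is the minimum number of colours in a proper edge-colouring (adjacent edges get distinct colours) such that every two distinct vertices are joined by a rainbow path. *)

(* Defs.v *)
From mathcomp Require Import all_boot.
Set Implicit Arguments. Unset Strict Implicit. Unset Printing Implicit Defensive.

Definition simple_graph (V : finType) (e : rel V) : Prop :=
  (forall x y, e x y = e y x) /\ (forall x, ~~ e x x).

Definition edge_colouring (V : finType) (e : rel V) (k : nat)
  (c : V -> V -> 'I_k) : Prop :=
  forall x y, e x y -> c x y = c y x.

Definition proper_colouring (V : finType) (e : rel V) (k : nat)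
  (c : V -> V -> 'I_k) : Prop :=
  forall x y z, e x y -> e x z -> y != z -> c x y != c x z.

Definition rainbow_path (V : finType) (e : rel V) (k : nat)
  (c : V -> V -> 'I_k) (x y : V) (p : seq V) : Prop :=
  [/\ path e x p, last x p = y, uniq (x :: p) & uniq (pairmap c x p)].

Definition rainbow_connected (V : finType) (e : rel V) (k : nat)
  (c : V -> V -> 'I_k) : Prop :=
  forall x y, x != y -> exists p, rainbow_path e c x y p.

Definition proper_rainbow_colouring (V : finType) (e : rel V) (k : nat)
  (c : V -> V -> 'I_k) : Prop :=
  [/\ edge_colouring e c, proper_colouring e c & rainbow_connected e c].

Definition is_prc (V : finType) (e : rel V) (n : nat) : Prop :=
  (exists c : V -> V -> 'I_n, proper_rainbow_colouring e c) /\
  (forall (k : nat) (c : V -> V -> 'I_k), proper_rainbow_colouring e c -> n <= k).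

Definition Kbip (s t : nat) : rel ('I_s + 'I_t) :=
  fun u v => match u, v with
             | inl _, inr _ | inr _, inl _ => true
             | _, _ => false
             end.

(* Main.v *)
Require Import Defs.
From mathcomp Require Import all_boot.

Lemma modinj n i j j' : j < n -> j' < n -> (i + j) %% n = (i + j') %% n -> j = j'.
Proof. by move=> hj hj' /eqP; rewrite eqn_modDl !modn_small // => /eqP. Qed.

Definition colK s t n (hn : 0 < n) (u v : 'I_s + 'I_t) : 'I_n :=
  match u, v with
  | inl i, inr j | inr j, inl i => Ordinal (ltn_pmod (i + j) hn)
  | _, _ => Ordinal hn
  end.

Theorem theorem5p3 (s t : nat) (hs : 0 < s) (ht : 0 < t) :
  is_prc (@Kbip s t) (maxn s t).
Proof.
have hn : 0 < maxn s t by rewrite leq_max hs.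
have hsn : s <= maxn s t by rewrite leq_maxl.
have htn : t <= maxn s t by rewrite leq_maxr.
split.
  exists (@colK s t _ hn); split.
  - by case=> x [] y.
  - case=> x [] y // [] z // _ _ hyz; apply/eqP => /(congr1 val) /= h.
      have e : (y : nat) = z.
        by apply: (@modinj (maxn s t) x y z _ _ h); apply: leq_trans (ltn_ord _) _.
      by move: hyz; rewrite (val_inj e) eqxx.
    have e : (y : nat) = z.
      by rewrite ![(_ + x)%N]addnC in h; apply: (@modinj (maxn s t) x y z _ _ h); apply: leq_trans (ltn_ord _) _.
    by move: hyz; rewrite (val_inj e) eqxx.
  - case=> x [] y hxy.
    + have hxy' : x != y by apply: contra hxy => /eqP ->.
      exists [:: inr (Ordinal ht); inl y]; split => //=.
        rewrite !inE andbT; apply/norP; split => //; apply: contra hxy' => /eqP [->].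
      rewrite !inE andbT; apply/eqP => /(congr1 val) /=.
      rewrite !addn0 !modn_small ?(leq_trans (ltn_ord _) hsn) // => e.
      by move/eqP: hxy'; apply; apply: val_inj.
    + by exists [:: inr y]; split => //=; rewrite !inE.
    + by exists [:: inl y]; split => //=; rewrite !inE.
    + have hxy' : x != y by apply: contra hxy => /eqP ->.
      exists [:: inl (Ordinal hs); inr y]; split => //=.
        rewrite !inE andbT; apply/norP; split => //; apply: contra hxy' => /eqP [->].
      rewrite !inE andbT; apply/eqP => /(congr1 val) /=.
      rewrite !add0n !modn_small ?(leq_trans (ltn_ord _) htn) // => e.
      by move/eqP: hxy'; apply; apply: val_inj.
move=> k c [_ hp _].
rewrite geq_max; apply/andP; split.
  have hinj : injective (fun i : 'I_s => c (inr (Ordinal ht)) (inl i)).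
    move=> i i' /eqP; apply: contraTeq => hii.
    by apply: hp => //=; apply: contra hii => /eqP [->].
  by have := leq_card _ hinj; rewrite !card_ord.
have hinj : injective (fun j : 'I_t => c (inl (Ordinal hs)) (inr j)).
  move=> i i' /eqP; apply: contraTeq => hii.
  by apply: hp => //=; apply: contra hii => /eqP [->].
by have := leq_card _ hinj; rewrite !card_ord.
Qed.
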